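(* Let $k\ge1$, $m=2k$, and $R_m^+(\hat K)=P_m(\hat K)+\mathrm{span}\{\hat x^m\hat y,\ \hat x\hat y^m\}$. If $\hat v\in R_m^+(\hat K)$ vanishes at all points of $G^+\cup I^+\cup\{(1,1)\}$, then $\hat v\equiv 0$.
   Context: $\hat K=[-1,1]^2$; $P_n(\hat K)$ is the space of polynomials of total degree $\le n$. Let $g_{\pm1},\dots,g_{\pm k}$ be the $2k$ zeros of the Legendre polynomial of degree $2k$ on $[-1,1]$ ($g_{-i}=-g_i$). $G^+=\{(1,g_i),(-1,g_i),(g_i,1),(g_i,-1): i\in\{-k,\dots,k\}\setminus\{0\}\}$. $I^+$ is a set of $(2k-3)(k-1)$ interior points of $\hat K$ unisolvent for $P_{2k-4}(\hat K)$ (every polynomial in $P_{2k-4}(\hat K)$ is uniquely determined by its values on $I^+$); $I^+=\emptyset$ when $k=1$. *)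

(* Defs.v *)
(* Bivariate polynomials are represented as {poly {poly R}}:
   the outer variable is y, the coefficients are polynomials in x. *)
From HB Require Import structures.
From mathcomp Require Import all_boot all_order all_algebra.
Set Implicit Arguments. Unset Strict Implicit. Unset Printing Implicit Defensive.
Import Order.TTheory GRing.Theory Num.Theory.
Local Open Scope ring_scope.

Section Defs.
Variable R : realFieldType.

Definition legendre (n : nat) : {poly R} :=
  ((2 ^ n * n`!)%N%:R)^-1 *: (derivn n (('X ^+ 2 - 1) ^+ n)).

Definition eval2 (p : {poly {poly R}}) (x y : R) : R := (p.[y%:P]).[x].

Definition coef2 (p : {poly {poly R}}) (i j : nat) : R := (p`_j)`_i.

Definition in_Pn (n : nat) (p : {poly {poly R}}) : Prop :=
  forall i j : nat, (n < i + j)%N -> coef2 p i j = 0.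

Definition in_Rplus (m : nat) (v : {poly {poly R}}) : Prop :=
  exists (p : {poly {poly R}}) (a b : R),
    in_Pn m p /\
    v = p + a%:P%:P * (('X ^+ m)%:P * 'X) + b%:P%:P * (('X)%:P * 'X ^+ m).

Definition Gplus (g : seq R) : seq (R * R) :=
  flatten [seq [:: (1, t); (-1, t); (t, 1); (t, -1)] | t <- g].

Definition interior (pt : R * R) : bool :=
  (-1 < pt.1 < 1) && (-1 < pt.2 < 1).

Definition unisolvent (n : nat) (I : seq (R * R)) : Prop :=
  forall p q : {poly {poly R}}, in_Pn n p -> in_Pn n q ->
    (forall pt, pt \in I -> eval2 p pt.1 pt.2 = eval2 q pt.1 pt.2) -> p = q.

End Defs.

(* Main.v *)
Require Import Defs.
From HB Require Import structures.
From mathcomp Require Import all_boot all_order all_algebra.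
From mathcomp Require Import zify ring lra.
Import Order.TTheory GRing.Theory Num.Theory.
Local Open Scope ring_scope.

Set Implicit Arguments. Unset Strict Implicit.
Section L.
Variable R : realFieldType.

Lemma comp_expr (p q : {poly R}) n : (p ^+ n) \Po q = (p \Po q) ^+ n.
Proof. elim: n => [|n IH]; first by rewrite !expr0 comp_polyC.
by rewrite !exprS comp_polyM IH. Qed.

Lemma derivn_shift (p : {poly R}) n : (p \Po ('X + 1)) ^`(n) = p ^`(n) \Po ('X + 1).
Proof. elim: n => [|n IH] //; rewrite !derivnS IH deriv_comp derivD derivX derivC addr0 mulr1 //. Qed.

Lemma legendre1 n : (legendre R n).[1] != 0.
Proof.
rewrite /legendre hornerZ mulf_eq0 negb_or invr_eq0 pnatr_eq0 muln_eq0 negb_or.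
rewrite expn_eq0 /= -lt0n fact_gt0 /=.
have -> : (1 : R) = ('X + 1 : {poly R}).[0] by rewrite hornerD hornerX hornerC add0r.
rewrite -horner_comp -derivn_shift nderivn_def hornerMn horner_coef0 coef_nderivn addn0 binn mulr1n.
rewrite comp_expr comp_polyB comp_polyC comp_polyM comp_polyX.
have -> : ('X + 1) * ('X + 1) - (1 : {poly R}) = 'X * ('X + 2%:R%:P).
  by rewrite polyC_natr; ring.
rewrite exprMn coefXnM ltnn subnn -horner_coef0.
rewrite horner_exp hornerD hornerX hornerC add0r.
by rewrite mulrn_eq0 negb_or -lt0n fact_gt0 expf_eq0 pnatr_eq0 andbF.
Qed.

Lemma coefRplus m (p : {poly {poly R}}) a b i j :
  coef2 (p + a%:P%:P * (('X ^+ m)%:P * 'X) + b%:P%:P * (('X)%:P * 'X ^+ m)) i j =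
  coef2 p i j + a * ((i == m) && (j == 1%N))%:R
              + b * ((i == 1%N) && (j == m))%:R.
Proof.
rewrite /coef2 !coefD !coefCM coefX coefXn.
congr (_ + _ * _ + _ * _).
  by case: (j == 1%N); rewrite /= ?mulr1 ?mulr0 ?coefXn ?coef0 ?andbT ?andbF.
by case: (j == m); rewrite /= ?mulr1 ?mulr0 ?coefX ?coef0 ?andbT ?andbF.
Qed.

Lemma size_hornerC (v : {poly {poly R}}) m c :
  (forall i j, (m < i)%N -> coef2 v i j = 0) -> (size (v.[c%:P]) <= m.+1)%N.
Proof.
move=> H; apply/leq_sizeP => i hi; rewrite horner_coef coef_sum big1 // => j _.
by rewrite -polyC_exp coefMC -/(coef2 v i j) H ?mul0r.
Qed.

Lemma size_map_eval (v : {poly {poly R}}) m c :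
  (forall i j, (m < j)%N -> coef2 v i j = 0) ->
  (size (map_poly (horner_eval c) v) <= m.+1)%N.
Proof.
move=> H; apply/leq_sizeP => j hj; rewrite coef_map /= /horner_eval.
suff -> : v`_j = 0 by rewrite horner0.
by apply/polyP => i; rewrite coef0; apply: H.
Qed.

Lemma eval_map (v : {poly {poly R}}) c y :
  (map_poly (horner_eval c) v).[y] = eval2 v c y.
Proof.
have := horner_map (horner_eval c) v y%:P.
rewrite /= /horner_eval hornerC /eval2 => ->; done.
Qed.

Lemma zero_of_roots (q : {poly R}) m rs :
  (size q <= m.+1)%N -> size rs = m.+1 -> uniq rs -> all (root q) rs -> q = 0.
Proof.
move=> hs hr hu ha; case: (eqVneq q 0) => // nz.
have := max_poly_roots nz ha hu; by rewrite hr ltnNge hs.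
Qed.

Lemma fact2 (A : idomainType) (p : {poly A}) :
  p.[1] = 0 -> p.[-1] = 0 -> (2%:R : A) != 0 -> exists r, p = r * ('X^2 - 1).
Proof.
move=> h1 hm1 h2.
have /factor_theorem [q hq] : root p 1 by apply/rootP.
move: hm1; rewrite hq hornerM hornerXsubC => /eqP; rewrite mulf_eq0 => /orP [hq1|].
  have /factor_theorem [r hr] : root q (-1) by apply/rootP/eqP.
  by exists r; rewrite hr polyCN polyC1; ring.
by rewrite -opprD oppr_eq0 (negbTE h2).
Qed.

Lemma Q_neq0 : ('X^2 - 1 : {poly R}) != 0.
Proof.
apply/eqP => h; have := congr1 (horner^~ 0) h.
rewrite hornerD hornerN hornerXn hornerC horner0 expr0n /= sub0r => /eqP.
by rewrite oppr_eq0 oner_eq0.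
Qed.

Lemma bifactor (v : {poly {poly R}}) :
  (forall j, (v`_j).[1] = 0) -> (forall j, (v`_j).[-1] = 0) ->
  v.[1] = 0 -> v.[-1] = 0 ->
  exists w, v = ('X^2 - 1)%:P * (w * ('X^2 - 1)).
Proof.
move=> hx1 hxm1 hy1 hym1.
set Q : {poly R} := 'X^2 - 1.
pose v1 := map_poly (fun q => q %/ Q) v.
have hv : v = Q%:P * v1.
  apply/polyP => j; rewrite coefCM coef_map_id0 ?div0p //.
  have h2R : (2%:R : R) != 0 by rewrite pnatr_eq0.
  have [r hr] := @fact2 _ _ (hx1 j) (hxm1 j) h2R.
  by rewrite hr mulpK ?Q_neq0 // mulrC.
have h2 : (2%:R : {poly R}) != 0 by rewrite -polyC_natr polyC_eq0 pnatr_eq0.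
have e1 : v1.[1] = 0.
  by move: hy1; rewrite hv hornerCM => /eqP; rewrite mulf_eq0 (negbTE Q_neq0) => /eqP.
have e2 : v1.[-1] = 0.
  by move: hym1; rewrite hv hornerCM => /eqP; rewrite mulf_eq0 (negbTE Q_neq0) => /eqP.
have [w hw] := @fact2 _ _ e1 e2 h2.
by exists w; rewrite hv hw.
Qed.

Lemma coef_fact (w : {poly {poly R}}) i j :
  coef2 (('X^2 - 1)%:P * (w * ('X^2 - 1))) i.+2 j.+2 =
  coef2 w i j - coef2 w i j.+2 - coef2 w i.+2 j + coef2 w i.+2 j.+2.
Proof.
rewrite /coef2 coefCM mulrBr mulr1 coefB coefMXn /= subn2 /=.
rewrite mulrC mulrBr mulr1 !coefB coefMXn /= subn2 /= !coefB.
ring.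
Qed.

Lemma deg_bound (w : {poly {poly R}}) :
  exists N, forall i j, (N < i + j)%N -> coef2 w i j = 0.
Proof.
pose M := \max_(j < size w) size (w`_j)%R.
exists (size w + M)%N => i j h.
rewrite /coef2; case: (ltnP j (size w)) => hj; last first.
  by rewrite (nth_default 0 hj) coef0.
apply: nth_default.
have hm : (size (w`_j)%R <= M)%N := @leq_bigmax _ (fun j : 'I_(size w) => size (w`_j)%R) (Ordinal hj).
apply: leq_trans hm _; lia.
Qed.

Lemma w_top (v w : {poly {poly R}}) m :
  v = ('X^2 - 1)%:P * (w * ('X^2 - 1)) ->
  (forall i j, (m < i + j + 4)%N -> coef2 v i.+2 j.+2 = 0) ->
  forall i j, (m < i + j + 4)%N -> coef2 w i j = 0.
Proof.
move=> hv hv0.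
have key : forall n, (forall i j, (n < i + j)%N -> coef2 w i j = 0) ->
    forall i j, (i + j = n)%N -> (m < n + 4)%N -> coef2 w i j = 0.
  move=> n H i j hij hm.
  have := hv0 i j; rewrite hij => /(_ hm); rewrite hv coef_fact.
  rewrite (H i j.+2) ?(H i.+2 j) ?(H i.+2 j.+2); try lia.
  by rewrite !subr0 addr0.
have [N HN] := deg_bound w.
suff : forall n, (forall i j, (n < i + j)%N -> coef2 w i j = 0) ->
    forall i j, (m < i + j + 4)%N -> coef2 w i j = 0 by apply; exact HN.
elim => [|n IH] H i j hm.
  case: (ltnP 0 (i + j)) => h; first by apply: H.
  by apply: (key 0%N) => //; lia.
case: (ltnP n.+1 (i + j)) => h; first by apply: H.
apply: IH => // i' j' h'.
case: (ltnP n.+1 (i' + j')) => h2; first by apply: H.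
apply: (key n.+1) => //; lia.
Qed.

Lemma memG (g : seq R) t : t \in g ->
  [/\ (1, t) \in Gplus g, (-1, t) \in Gplus g, (t, 1) \in Gplus g & (t, -1) \in Gplus g].
Proof.
elim: g => [//|a g IH]; rewrite in_cons => /orP [/eqP ->|/IH [h1 h2 h3 h4]];
rewrite /Gplus /= !in_cons ?eqxx ?orbT //.
by rewrite -!/(Gplus g) h1 h2 h3 h4 !orbT.
Qed.
End L.

Theorem mainTheorem6 (R : realFieldType) (k : nat) (g : seq R)
    (I : seq (R * R)) (v : {poly {poly R}}) :
  (1 <= k)%N ->
  uniq g -> size g = (2 * k)%N -> all (root (legendre R (2 * k))) g ->
  size I = ((2 * k - 3) * (k - 1))%N -> all (@interior R) I ->
  ((2 <= k)%N -> unisolvent (2 * k - 4) I) ->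
  in_Rplus (2 * k) v ->
  (forall pt, pt \in Gplus g ++ I ++ [:: (1, 1)] -> eval2 v pt.1 pt.2 = 0) ->
  v = 0.
Proof.
move=> hk hu hsg hroots hsI hint hun [p [a [b [hp hv]]]] hev.
set m := (2 * k)%N in hsg hp hv hroots.
have hm2 : (2 <= m)%N by rewrite /m; lia.
have hc : forall i j, coef2 v i j = coef2 p i j + a * ((i == m) && (j == 1%N))%:R
              + b * ((i == 1%N) && (j == m))%:R by move=> i j; rewrite hv coefRplus.
have hsi : forall i j, (m < i)%N -> coef2 v i j = 0.
  move=> i j hi; rewrite hc hp; last by lia.
  have -> : (i == m) = false by apply/eqP; lia.
  have -> : (i == 1%N) = false by apply/eqP; lia.
  by rewrite !mulr0 !addr0.
have hsj : forall i j, (m < j)%N -> coef2 v i j = 0.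
  move=> i j hi; rewrite hc hp; last by lia.
  have -> : (j == 1%N) = false by apply/eqP; lia.
  have -> : (j == m) = false by apply/eqP; lia.
  by rewrite !andbF !mulr0 !addr0.
have htop : forall i j, (m < i + j + 4)%N -> coef2 v i.+2 j.+2 = 0.
  move=> i j hi; rewrite hc hp; last by lia.
  by rewrite !andbF !mulr0 !addr0.
have h1g : 1 \notin g.
  apply/negP => h1; have := allP hroots 1 h1; rewrite /root.
  by rewrite (negbTE (legendre1 R m)).
have hu1 : uniq (1 :: g) by rewrite /= h1g hu.
have hs1 : size (1 :: g) = m.+1 by rewrite /= hsg.
have inG : forall pt, pt \in Gplus g -> eval2 v pt.1 pt.2 = 0.
  by move=> pt hpt; apply: hev; rewrite mem_cat hpt.
have h11 : eval2 v 1 1 = 0.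
  by apply: (hev (1, 1)); rewrite !mem_cat mem_head !orbT.
have ex1 : map_poly (horner_eval 1) v = 0.
  apply: (zero_of_roots (size_map_eval 1 hsj) hs1 hu1).
  apply/allP => y; rewrite in_cons => /orP [/eqP ->|hy]; apply/rootP; rewrite eval_map //.
  by have [h _ _ _] := memG hy; exact: (inG _ h).
have ey1 : v.[1%:P] = 0.
  apply: (zero_of_roots (size_hornerC 1 hsi) hs1 hu1).
  apply/allP => x; rewrite in_cons => /orP [/eqP ->|hx]; apply/rootP; first exact: h11.
  by have [_ _ h _] := memG hx; exact: (inG _ h).
have exm1 : map_poly (horner_eval (-1)) v = 0.
  apply: (zero_of_roots (size_map_eval (-1) hsj) hs1 hu1).
  apply/allP => y; rewrite in_cons => /orP [/eqP ->|hy]; apply/rootP; rewrite eval_map //.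
    by rewrite /eval2 ey1 horner0.
  by have [_ h _ _] := memG hy; exact: (inG _ h).
have eym1 : v.[(-1)%:P] = 0.
  apply: (zero_of_roots (size_hornerC (-1) hsi) hs1 hu1).
  apply/allP => x; rewrite in_cons => /orP [/eqP ->|hx]; apply/rootP.
    by rewrite -[_.[1]]/(eval2 v 1 (-1)) -eval_map ex1 horner0.
  by have [_ _ _ h] := memG hx; exact: (inG _ h).
have [w hw] : exists w, v = ('X^2 - 1)%:P * (w * ('X^2 - 1)).
  apply: bifactor.
  - by move=> j; have := congr1 (fun q : {poly R} => q`_j) ex1; rewrite /= coef_map coef0.
  - by move=> j; have := congr1 (fun q : {poly R} => q`_j) exm1; rewrite /= coef_map coef0.
  - by rewrite -polyC1.
  - by rewrite -polyC1 -polyCN.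
have hw0 := w_top hw htop.
have hv0 : w = 0 -> v = 0 by move=> w0; rewrite hw w0 mul0r mulr0.
apply: hv0.
case: (ltnP 1 k) => hk2; last first.
  apply/polyP => j; apply/polyP => i; rewrite !coef0.
  by apply: hw0; rewrite /m; lia.
apply: (hun hk2).
- by move=> i j hij; apply: hw0; rewrite /m; lia.
- by move=> i j _; rewrite /coef2 !coef0.
move=> [x y] hxy /=.
have := allP hint _ hxy; rewrite /interior /= => /andP [/andP [x1 x2] /andP [y1 y2]].
have := hev (x, y); rewrite !mem_cat hxy orbT /= => /(_ isT).
rewrite hw /eval2 hornerCM hornerM !hornerE /=.
move=> /eqP; rewrite !mulf_eq0 => /orP [/orP [h|/eqP //]|h]; exfalso; move/eqP: h => h.
  by clear -h x1 x2; nra.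
by clear -h y1 y2; nra.
Qed.
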